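(* Let $T$ be a doubly substochastic operator. Then $F_T(x,y):=\int_0^xT\mathbf{1}_{[0,y]}(s)\,ds$, $(x,y)\in\mathbb{R}_+^2$, is a bivariate subdistribution function. If $T$ is additionally equivariant, then $F_T$ is a bivariate tail dependence function, i.e. $F_T(\mathbf{w})=\lim_{s\searrow0}C(s\mathbf{w})/s$ for all $\mathbf{w}\in\mathbb{R}_+^2$ for some $2$-copula $C$.
   Context: $\mathbb{R}_+=[0,\infty)$ with Lebesgue measure; $L^1(\mathbb{R}_+)+L^\infty(\mathbb{R}_+):=\{f+g: f\in L^1(\mathbb{R}_+),g\in L^\infty(\mathbb{R}_+)\}$. A linear operator $T:L^1(\mathbb{R}_+)+L^\infty(\mathbb{R}_+)\to L^1(\mathbb{R}_+)+L^\infty(\mathbb{R}_+)$ is doubly substochastic if (i) $Tf\ge0$ whenever $f\ge0$; (ii) $T(L^1)\subset L^1$ and $T(L^\infty)\subset L^\infty$; (iii) $\|Tf\|_1\le\|f\|_1$ for $f\in L^1$ and $\|Tg\|_\infty\le\|g\|_\infty$ for $g\in L^\infty$; (iv) $Tf=\sup_nTf_n$ whenever $f_n\in L^1\cap L^\infty$, $f\in L^\infty$ and $f_n\nearrow f$. $T$ is equivariant if $T(f\circ\sigma)=(Tf)\circ\sigma$ for all dilations $\sigma(x)=x/s$, $s>0$. A function $F:\mathbb{R}_+^d\to\mathbb{R}_+$ is a subdistribution function if it is nonnegative, $d$-increasing, bounded above by $\min_iw_i$, and Lipschitz with constant $1$ (i.e. $|F(\mathbf{x})-F(\mathbf{y})|\le\sum_i|x_i-y_i|$).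 A bivariate tail dependence function is one of the form $\mathbf{w}\mapsto\lim_{s\searrow0}C(s\mathbf{w})/s$ for a $2$-copula $C$; equivalently, a positively homogeneous (of order $1$) subdistribution function. *)

(* Defs.v *)
(* R : realType, Lebesgue measure on R, functions on
   R_+ represented by functions R -> R considered on [set x | 0 <= x]. *)
From HB Require Import structures.
From mathcomp Require Import all_boot all_order all_algebra.
From mathcomp Require Import all_classical all_reals all_analysis.
Set Implicit Arguments. Unset Strict Implicit. Unset Printing Implicit Defensive.
Import Order.TTheory GRing.Theory Num.Theory.
Import numFieldNormedType.Exports.
Local Open Scope classical_set_scope.
Local Open Scope ring_scope.

Section Defs.
Variable R : realType.
Local Notation mu := (@lebesgue_measure R).

Definition Rnonneg : set R := [set x | 0 <= x].

Definition aeeq (f g : R -> R) : Prop :=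
  {ae mu, forall x, Rnonneg x -> f x = g x}.

Definition inL1 (f : R -> R) : Prop :=
  measurable_fun Rnonneg f /\ mu.-integrable Rnonneg (EFin \o f).

(* f is in L^oo(R_+), with |f| <= M a.e. expressing ||f||_oo <= M *)
Definition ae_bounded_by (f : R -> R) (M : R) : Prop :=
  {ae mu, forall x, Rnonneg x -> `|f x| <= M}.

Definition inLinf (f : R -> R) : Prop :=
  measurable_fun Rnonneg f /\ exists M, ae_bounded_by f M.

Definition inL1Linf (f : R -> R) : Prop :=
  measurable_fun Rnonneg f /\
  exists g h, [/\ inL1 g, inLinf h & aeeq f (g \+ h)].

Definition L1norm (f : R -> R) : \bar R :=
  (\int[mu]_(x in Rnonneg) (`|f x|)%:E)%E.

(* T : L^1 + L^oo -> L^1 + L^oo is a doubly substochastic linear operator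
   (acting on representatives, compatibly with a.e. equality). *)
Definition doubly_substochastic (T : (R -> R) -> (R -> R)) : Prop :=
      (forall f, inL1Linf f -> inL1Linf (T f)) /\
      (forall f g, inL1Linf f -> inL1Linf g -> aeeq f g -> aeeq (T f) (T g)) /\
      (forall f g (a b : R), inL1Linf f -> inL1Linf g ->
         aeeq (T (fun x => a * f x + b * g x))
              (fun x => a * T f x + b * T g x)) /\
      (forall f, inL1Linf f -> {ae mu, forall x, Rnonneg x -> 0 <= f x} ->
         {ae mu, forall x, Rnonneg x -> 0 <= T f x}) /\
      ((forall f, inL1 f -> inL1 (T f)) /\ (forall g, inLinf g -> inLinf (T g))) /\
      ((forall f, inL1 f -> (L1norm (T f) <= L1norm f)%E) /\
      (forall g M, inLinf g -> ae_bounded_by g M -> ae_bounded_by (T g) M)) /\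
      (forall (fs : nat -> R -> R) (f : R -> R),
         (forall n, inL1 (fs n) /\ inLinf (fs n)) -> inLinf f ->
         {ae mu, forall x, Rnonneg x ->
            (forall n, fs n x <= fs n.+1 x) /\ fs n x @[n --> \oo] --> f x} ->
         {ae mu, forall x, Rnonneg x ->
            ereal_sup [set (T (fs n) x)%:E | n in [set: nat]] = (T f x)%:E}).

Definition equivariant (T : (R -> R) -> (R -> R)) : Prop :=
  forall (s : R) (f : R -> R), 0 < s -> inL1Linf f ->
    aeeq (T (fun x => f (x / s))) (fun x => T f (x / s)).

Definition F_T (T : (R -> R) -> (R -> R)) (x y : R) : R :=
  Rintegral mu `[0, x] (T \1_`[0, y]).

Definition subdistribution2 (F : R -> R -> R) : Prop :=
  [/\ (forall x y, 0 <= x -> 0 <= y -> 0 <= F x y),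
      (forall x1 x2 y1 y2, 0 <= x1 -> x1 <= x2 -> 0 <= y1 -> y1 <= y2 ->
         0 <= F x2 y2 - F x2 y1 - F x1 y2 + F x1 y1),
      (forall x y, 0 <= x -> 0 <= y -> F x y <= Num.min x y) &
      (forall x1 y1 x2 y2, 0 <= x1 -> 0 <= y1 -> 0 <= x2 -> 0 <= y2 ->
         `|F x1 y1 - F x2 y2| <= `|x1 - x2| + `|y1 - y2|)].

Definition unit_I (u : R) : Prop := 0 <= u <= 1.

Definition copula2 (C : R -> R -> R) : Prop :=
  [/\ (forall u v, unit_I u -> unit_I v -> unit_I (C u v)),
      (forall u, unit_I u -> C u 0 = 0 /\ C 0 u = 0),
      (forall u, unit_I u -> C u 1 = u /\ C 1 u = u) &
      (forall u1 u2 v1 v2, unit_I u1 -> unit_I u2 -> unit_I v1 -> unit_I v2 ->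
         u1 <= u2 -> v1 <= v2 ->
         0 <= C u2 v2 - C u2 v1 - C u1 v2 + C u1 v1)].

Definition tail_dependence2 (F : R -> R -> R) : Prop :=
  exists C, copula2 C /\
    forall x y, 0 <= x -> 0 <= y ->
      (fun s => C (s * x) (s * y) / s) @ 0^'+ --> F x y.

End Defs.

(* Main.v *)
Require Import Defs.
From HB Require Import structures.
From mathcomp Require Import all_boot all_order all_algebra.
From mathcomp Require Import all_classical all_reals all_analysis.
From mathcomp Require Import measurable_realfun.
From mathcomp Require Import ring lra.
Set Implicit Arguments. Unset Strict Implicit. Unset Printing Implicit Defensive.
Import Order.TTheory GRing.Theory Num.Theory.
Import numFieldNormedType.Exports.
Local Open Scope classical_set_scope.
Local Open Scope ring_scope.

Section G.
Variable R : realType.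
Local Notation mu := (@lebesgue_measure R).

Lemma RnonnegE : @Rnonneg R = `[0, +oo[%classic.
Proof. by apply/seteqP; split => x; rewrite /Rnonneg /= in_itv /= andbT. Qed.

Lemma mRnonneg : measurable (@Rnonneg R).
Proof. by rewrite RnonnegE; exact: measurable_itv. Qed.

Lemma pf_scale (s : R) (s0 : 0 < s) (A : set R) : measurable A ->
  mu ((fun t => t / s) @^-1` A) = (s%:E * mu A)%E.
Proof.
move=> mA.
have mphi : measurable_fun setT (fun t : R => t / s) by exact: measurable_realfun.mulrr_measurable.
have k0 : 0 <= s^-1 by rewrite invr_ge0 ltW.
pose k : {nonneg R} := NngNum k0.
pose phi : measurableTypeR R -> measurableTypeR R := fun t => t / s.
have mphi2 : measurable_fun setT phi by exact: mphi.
have := @lebesgue_measure_unique R (mscale k (pushforward mu phi)).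
move/(_ mphi2).
have sn0 : s != 0 by rewrite gt_eqF.
have pre a b : phi @^-1` `]a, b] = `]a * s, b * s]%classic.
  apply/seteqP; split => t /=; rewrite !in_itv /=.
    by rewrite /phi ltr_pdivlMr // ler_pdivrMr.
  by rewrite /phi ltr_pdivlMr // ler_pdivrMr.
move=> /(_ _) /(_ A mA) -> .
  transitivity (s%:E * (k%:num%:E * mu (phi @^-1` A)))%E; last by [].
  by rewrite muleA -EFinM /= divff // mul1e.
move=> _ [[a b] _ <-] /=.
transitivity (k%:num%:E * mu (phi @^-1` `]a, b]))%E; last by [].
rewrite pre !lebesgue_measure_itv /= !lte_fin ltr_pM2r //.
case: ifPn => _.
  by rewrite -!EFinD -EFinM; congr (_%:E); field.
by rewrite mule0.
Qed.

Lemma CV0 (s x : R) (h : R -> \bar R) : 0 < s -> 0 <= x ->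
  measurable_fun [set: R] (h : R -> \bar R) -> (forall y, (0 <= h y)%E) ->
  (\int[mu]_(t in `[0%R, (s * x)%R]) h (t / s)%R = s%:E * \int[mu]_(y in `[0%R, x]) h y)%E.
Proof.
move=> s0 x0 mh h0.
have mphi : measurable_fun setT (fun t : R => t / s) by exact: measurable_realfun.mulrr_measurable.
pose phi : measurableTypeR R -> measurableTypeR R := fun t => t / s.
have mphi2 : measurable_fun setT phi by exact: mphi.
have pre : phi @^-1` `[0, x] = `[0, s * x]%classic.
  apply/seteqP; split => t /=; rewrite !in_itv /=.
    by rewrite /phi ler_pdivlMr // ler_pdivrMr // mul0r mulrC.
  by rewrite /phi ler_pdivlMr // ler_pdivrMr // mul0r mulrC.
have E := @ge0_integral_pushforward _ _ _ _ _ phi mphi2 mu `[0, x]%classic h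
  (measurable_itv _) (measurable_funS measurableT (@subsetT _ _) mh) (fun y _ => h0 y).
rewrite pre in E.
transitivity (\int[pushforward mu phi]_(y in `[0%R, x]) h y)%E.
  by rewrite E.
pose k : {nonneg R} := NngNum (ltW s0).
transitivity (\int[mscale k mu]_(y in `[0%R, x]) h y)%E.
  apply: eq_measure_integral => A mA _.
  transitivity (s%:E * mu A)%E; last by [].
  exact: pf_scale.
rewrite ge0_integral_mscale //.
exact: measurable_funS mh.
Qed.

Lemma CV (s x : R) (g : R -> R) : 0 < s -> 0 <= x ->
  measurable_fun [set: R] g -> mu.-integrable `[0, x] (EFin \o g) ->
  mu.-integrable `[0, s * x] (EFin \o (fun t => g (t / s))) /\
  Rintegral mu `[0, s * x] (fun t => g (t / s)) = s * Rintegral mu `[0, x] g.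
Proof.
move=> s0 x0 mg ig.
have mphi : measurable_fun setT (fun t : R => t / s) by exact: measurable_realfun.mulrr_measurable.
have mgphi : measurable_fun [set: R] (fun t : R => g (t / s)) by exact: measurableT_comp.
have mEg : measurable_fun [set: R] (EFin \o g) by exact/measurable_EFinP.
have ig' : mu.-integrable `[0, s * x] (EFin \o (fun t => g (t / s))).
  apply/integrableP; split; first by apply/measurable_EFinP; exact: measurable_funS mgphi.
  have := @CV0 s x (fun y => `|(g y)%:E|)%E s0 x0.
  move=> ->; last by [].
    apply: lte_mul_pinfty => //; first by rewrite lee_fin ltW.
    by case/integrableP : ig.
  exact: measurableT_comp.
split => //.
have E : (\int[mu]_(t in `[0%R, (s * x)%R]) ((EFin \o g) \o (fun t : R => (t / s)%R)) t =
    s%:E * \int[mu]_(y in `[0%R, x]) (EFin \o g) y)%E.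
  rewrite integralE funepos_comp funeneg_comp.
  rewrite (@CV0 s x (funepos (EFin \o g)) s0 x0 (measurable_funepos mEg) (funepos_ge0 _)).
  rewrite (@CV0 s x (funeneg (EFin \o g)) s0 x0 (measurable_funeneg mEg) (funeneg_ge0 _)).
  have fp : (\int[mu]_(y in `[0%R, x]) (funepos (EFin \o g)) y)%E \is a fin_num.
    by apply: integrable_fin_num => //; exact: integrable_funepos.
  have fn : (\int[mu]_(y in `[0%R, x]) (funeneg (EFin \o g)) y)%E \is a fin_num.
    by apply: integrable_fin_num => //; exact: integrable_funeneg.
  rewrite [in RHS]integralE -(fineK fp) -(fineK fn).
  by rewrite muleBr // fin_num_adde_defl.
rewrite /Rintegral.
change (fine (\int[mu]_(t in `[0%R, (s*x)%R]) ((EFin \o g) \o (fun t : R => (t / s)%R)) t)%E = s * fine (\int[mu]_(y in `[0%R, x]) (EFin \o g) y)%E).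
rewrite E fineM //.
exact: integrable_fin_num.
Qed.

Lemma aeS (P Q : R -> Prop) : (forall x, P x -> Q x) ->
  {ae mu, forall x, P x} -> {ae mu, forall x, Q x}.
Proof. move=> PQ; exact: (@filterS _ _ (ae_filter_ringOfSetsType mu) _ _ PQ). Qed.

Lemma aeS2 (P Q S : R -> Prop) : (forall x, P x -> Q x -> S x) ->
  {ae mu, forall x, P x} -> {ae mu, forall x, Q x} -> {ae mu, forall x, S x}.
Proof. move=> PQ; exact: (@filterS2 _ _ (ae_filter_ringOfSetsType mu) _ _ _ PQ). Qed.

Lemma mu_cc (x : R) : 0 <= x -> mu `[0, x] = x%:E.
Proof.
move=> x0; rewrite lebesgue_measure_itv /= lte_fin.
case: ltgtP x0 => // [x0 _|<- _]; first by rewrite sube0.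
by [].
Qed.

Lemma mu_oc (a b : R) : a <= b -> mu `]a, b] = (b - a)%:E.
Proof.
move=> ab; rewrite lebesgue_measure_itv /= lte_fin.
case: ifPn => [_|]; first by rewrite EFinB.
rewrite -leNgt => ba; have -> : b = a by apply/eqP; rewrite eq_le ba ab.
by rewrite subrr.
Qed.

Lemma sub_cc (x : R) : `[0, x] `<=` @Rnonneg R.
Proof. by move=> t; rewrite /= in_itv /= => /andP[]. Qed.

Lemma sub_oc (a b : R) : 0 <= a -> `]a, b] `<=` @Rnonneg R.
Proof. by move=> a0 t; rewrite /= in_itv /= => /andP[ta _]; rewrite /Rnonneg /= ltW // (le_lt_trans a0 ta). Qed.

Section good.
Variables (phi : R -> R).
Hypotheses (mphi : measurable_fun (@Rnonneg R) phi)
  (iphi : mu.-integrable (@Rnonneg R) (EFin \o phi))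
  (pphi : {ae mu, forall x, @Rnonneg R x -> 0 <= phi x}).

Lemma good_int B : measurable B -> B `<=` @Rnonneg R -> mu.-integrable B (EFin \o phi).
Proof. by move=> mB BR; apply: integrableS iphi => //; exact: mRnonneg. Qed.

Lemma good_ge0 B : measurable B -> B `<=` @Rnonneg R -> 0 <= Rintegral mu B phi.
Proof.
move=> mB BR; apply: fine_ge0.
have mB' : measurable_fun B phi by exact: (measurable_funS mRnonneg BR mphi).
rewrite (@ae_eq_integral _ _ _ mu B (fun x => `|(phi x)%:E|)%E) //.
- by apply: integral_ge0 => x _; exact: abse_ge0.
- exact/measurable_EFinP.
- by apply: measurableT_comp => //; exact/measurable_EFinP.
- apply: aeS pphi => x H Bx /=.
  by rewrite ger0_norm // H //; exact: BR.
Qed.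

Lemma good_le_abs B : measurable B -> B `<=` @Rnonneg R ->
  Rintegral mu B phi <= fine (\int[mu]_(x in B) `|(phi x)%:E|)%E.
Proof.
move=> mB BR; apply: le_trans (ler_norm _) _.
apply: le_trans (le_normr_Rintegral _ _) _ => //; first exact: good_int.
Qed.

Lemma good_fin B : measurable B -> B `<=` @Rnonneg R ->
  (\int[mu]_(x in B) `|(phi x)%:E|)%E \is a fin_num.
Proof.
move=> mB BR; have /integrableP[_ h] := good_int mB BR.
by rewrite ge0_fin_numE // integral_ge0.
Qed.

Lemma good_leL1 B : measurable B -> B `<=` @Rnonneg R ->
  Rintegral mu B phi <= fine (L1norm phi).
Proof.
move=> mB BR; apply: le_trans (good_le_abs mB BR) _.
apply: fine_le; [exact: good_fin|exact: (good_fin mRnonneg)|].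
apply: ge0_subset_integral => //; first exact: mRnonneg.
by apply: measurableT_comp => //; exact/measurable_EFinP.
Qed.

Lemma good_leM B M : measurable B -> B `<=` @Rnonneg R -> (mu B < +oo)%E ->
  0 <= M -> ae_bounded_by phi M -> Rintegral mu B phi <= M * fine (mu B).
Proof.
move=> mB BR mBoo M0 bM; apply: le_trans (good_le_abs mB BR) _.
have muBfin : mu B \is a fin_num by rewrite ge0_fin_numE.
have E : fine (M%:E * mu B)%E = M * fine (mu B) by rewrite fineM.
rewrite -E.
apply: fine_le; [exact: good_fin| by rewrite fin_numM |].
rewrite -integral_cst //.
apply: ae_ge0_le_integral.
- exact: mB.
- by move=> x _; exact: abse_ge0.
- by apply: measurableT_comp => //; apply/measurable_EFinP; exact: (measurable_funS mRnonneg BR mphi).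
- by move=> x _; rewrite /cst lee_fin.
- exact: measurable_cst.
- apply: aeS bM => x H Bx; rewrite /cst /= lee_fin; exact/H/BR.
Qed.

Hypothesis b1 : ae_bounded_by phi 1.

Lemma Phi_bd x : 0 <= x -> [/\ 0 <= Rintegral mu `[0, x] phi,
  Rintegral mu `[0, x] phi <= x & Rintegral mu `[0, x] phi <= fine (L1norm phi)].
Proof.
move=> x0; split.
- apply: good_ge0; [exact: measurable_itv | exact: sub_cc].
- have := @good_leM `[0, x] 1 (measurable_itv _) (@sub_cc x).
  by rewrite mu_cc // mul1r; apply; rewrite ?ltry.
- by apply: good_leL1; [exact: measurable_itv | exact: sub_cc].
Qed.

Lemma Phi_diff a b : 0 <= a -> a <= b ->
  0 <= Rintegral mu `[0, b] phi - Rintegral mu `[0, a] phi <= b - a.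
Proof.
move=> a0 ab.
rewrite (@Rintegral_itvB _ phi (BLeft 0) (BRight b) a); last 3 first.
- by apply: good_int; [exact: measurable_itv | exact: sub_cc].
- by rewrite bnd_simp.
- by rewrite bnd_simp.
apply/andP; split; first by apply: good_ge0; [exact: measurable_itv | exact: sub_oc].
have := @good_leM `]a, b] 1 (measurable_itv _) (@sub_oc a b a0).
by rewrite mu_oc // mul1r; apply; rewrite ?ltry.
Qed.

End good.
Lemma indic01 (A : set R) x : 0 <= (\1_A x : R) <= 1.
Proof. by rewrite indicE; case: (x \in A) => /=; rewrite ?lexx ?ler01. Qed.

Lemma indic_props (A : set R) : measurable A -> A `<=` @Rnonneg R -> (mu A < +oo)%E ->
  [/\ inL1 (\1_A : R -> R), inLinf (\1_A : R -> R), inL1Linf (\1_A : R -> R),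
      ae_bounded_by (\1_A : R -> R) 1 & L1norm (\1_A : R -> R) = mu A].
Proof.
move=> mA AR Afin.
have mI : measurable_fun (@Rnonneg R) (\1_A : R -> R) by exact: measurable_indic.
have nI : L1norm (\1_A : R -> R) = mu A.
  rewrite /L1norm.
  transitivity (\int[mu]_(x in @Rnonneg R) (\1_A x)%:E)%E.
    apply: eq_integral => x _; congr EFin.
    by rewrite ger0_norm //; have /andP[] := indic01 A x.
  by rewrite integral_indic //; [rewrite setIidl | exact: mRnonneg].
have bI : ae_bounded_by (\1_A : R -> R) 1.
  apply: aeW => x _; have /andP[h1 h2] := indic01 A x.
  by rewrite ger0_norm.
have L1I : inL1 (\1_A : R -> R).
  split => //; apply/integrableP; split; first exact/measurable_EFinP.
  by rewrite -/(L1norm _) nI.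
have LinfI : inLinf (\1_A : R -> R) by split => //; exists 1.
split => //; split => //.
exists (\1_A : R -> R), (cst 0); split => //.
  split; first exact: measurable_cst.
  by exists 0; apply: aeW => x _; rewrite normr0.
by apply: aeW => x _; rewrite /= addr0.
Qed.

Lemma memI (i : interval R) (t : R) : (t \in [set` i]) = (t \in i).
Proof. by apply/idP/idP => [/set_mem|/mem_set]. Qed.

Lemma indD (y1 y2 : R) : 0 <= y1 -> y1 <= y2 ->
  (fun t => 1 * (\1_`[0, y2] t : R) + (-1) * \1_`[0, y1] t) = \1_`]y1, y2].
Proof.
move=> y10 y12; apply/funext => t; rewrite !indicE !memI !in_itv /=.
have [t0|t0] := leP 0 t; have [t2|t2] := leP t y2; have [t1|t1] := leP t y1;
  have [t1'|t1'] := ltP y1 t; rewrite /= ?mulr1 ?mulr0 ?addr0 ?add0r //; lra.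
Qed.

Lemma indS (s y : R) : 0 < s ->
  (fun t => (\1_`[0, y] (t / s) : R)) = \1_`[0, s * y].
Proof.
move=> s0; apply/funext => t; rewrite !indicE !memI !in_itv /=.
by rewrite ler_pdivlMr // mul0r ler_pdivrMr // mulrC.
Qed.

Lemma fine_L1_le (f : R -> R) (r : R) : (L1norm f <= r%:E)%E -> fine (L1norm f) <= r.
Proof.
move=> h; have h0 : (0 <= L1norm f)%E by apply: integral_ge0 => x _; rewrite lee_fin.
have fin : L1norm f \is a fin_num by rewrite ge0_fin_numE // (le_lt_trans h) ?ltry.
by rewrite -lee_fin fineK.
Qed.

Section T.
Variable T : (R -> R) -> (R -> R).
Hypothesis hT : doubly_substochastic T.

Lemma T_good (A : set R) : measurable A -> A `<=` @Rnonneg R -> (mu A < +oo)%E ->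
  [/\ inL1 (T (\1_A)), {ae mu, forall x, @Rnonneg R x -> 0 <= T (\1_A) x},
      ae_bounded_by (T (\1_A)) 1 & (L1norm (T (\1_A)) <= mu A)%E].
Proof.
move=> mA AR Afin.
have [L1I LinfI LLI bI nI] := indic_props mA AR Afin.
case: hT => _ [_ [_ [hpos [[hL1 _] [[hn1 hninf] _]]]]].
split.
- exact: hL1.
- apply: hpos => //; apply: aeW => x _; by have /andP[] := indic01 A x.
- exact: hninf.
- by rewrite -nI; exact: hn1.
Qed.

Lemma Tcc y : 0 <= y ->
  [/\ inL1 (T \1_`[0, y]), {ae mu, forall x, @Rnonneg R x -> 0 <= T \1_`[0, y] x},
      ae_bounded_by (T \1_`[0, y]) 1 & fine (L1norm (T \1_`[0, y])) <= y].
Proof.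
move=> y0; have [] := @T_good `[0, y] (measurable_itv _) (@sub_cc y).
  by rewrite mu_cc // ltry.
by rewrite mu_cc // => ? ? ? /fine_L1_le.
Qed.

Lemma Toc y1 y2 : 0 <= y1 -> y1 <= y2 ->
  [/\ inL1 (T \1_`]y1, y2]), {ae mu, forall x, @Rnonneg R x -> 0 <= T \1_`]y1, y2] x},
      ae_bounded_by (T \1_`]y1, y2]) 1 & fine (L1norm (T \1_`]y1, y2])) <= y2 - y1].
Proof.
move=> y10 y12; have [] := @T_good `]y1, y2] (measurable_itv _) (@sub_oc y1 y2 y10).
  by rewrite mu_oc // ltry.
by rewrite mu_oc // => ? ? ? /fine_L1_le.
Qed.

Lemma F_bds x y : 0 <= x -> 0 <= y ->
  [/\ 0 <= F_T T x y, F_T T x y <= x & F_T T x y <= y].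
Proof.
move=> x0 y0; have [[m i] p b n] := Tcc y0.
have [h1 h2 h3] := Phi_bd m i p b x0.
by split => //; exact: le_trans h3 n.
Qed.

Lemma F_x a b y : 0 <= a -> a <= b -> 0 <= y ->
  0 <= F_T T b y - F_T T a y <= b - a.
Proof.
move=> a0 ab y0; have [[m i] p b1 n] := Tcc y0.
exact: Phi_diff.
Qed.

Lemma F_y x y1 y2 : 0 <= x -> 0 <= y1 -> y1 <= y2 ->
  F_T T x y2 - F_T T x y1 = Rintegral mu `[0, x] (T \1_`]y1, y2]).
Proof.
move=> x0 y10 y12.
have y20 : 0 <= y2 by exact: le_trans y12.
have [[m1 i1] _ _ _] := Tcc y10.
have [[m2 i2] _ _ _] := Tcc y20.
have [[m i] _ _ _] := Toc y10 y12.
case: hT => _ [_ [hlin _]].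
have [_ _ LL1 _ _] := indic_props (measurable_itv `[0, y1]) (@sub_cc y1) (ltac:(by rewrite mu_cc // ltry)).
have [_ _ LL2 _ _] := indic_props (measurable_itv `[0, y2]) (@sub_cc y2) (ltac:(by rewrite mu_cc // ltry)).
have := hlin _ _ 1 (-1) LL2 LL1; rewrite indD // => hae.
rewrite /F_T -RintegralB; last 2 first.
- exact: (good_int i2 (measurable_itv _) (@sub_cc x)).
- exact: (good_int i1 (measurable_itv _) (@sub_cc x)).
have mcc : measurable (`[0, x]%classic : set R) by exact: measurable_itv.
have scc := @sub_cc x.
symmetry; congr fine.
apply: ae_eq_integral => //.
- by apply/measurable_EFinP; exact: (measurable_funS mRnonneg scc m).
- apply/measurable_EFinP; apply: measurable_funB.
  + exact: (measurable_funS mRnonneg scc m2).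
  + exact: (measurable_funS mRnonneg scc m1).
- apply: aeS hae => t H xt; rewrite /= H; last exact: scc.
  by rewrite mul1r mulN1r.
exact: measurable_itv.
Qed.

Lemma absle (u v w : R) : 0 <= v - u <= w -> `|u - v| <= w.
Proof. by move=> /andP[h1 h2]; rewrite distrC ger0_norm. Qed.

Lemma F_sub : subdistribution2 (F_T T).
Proof.
split.
- by move=> x y x0 y0; have [] := F_bds x0 y0.
- move=> x1 x2 y1 y2 x10 x12 y10 y12.
  have x20 : 0 <= x2 by exact: le_trans x12.
  have e2 := F_y x20 y10 y12.
  have e1 := F_y x10 y10 y12.
  have [[m i] p b _] := Toc y10 y12.
  have /andP[h _] := Phi_diff m i p b x10 x12.
  lra.
- move=> x y x0 y0; have [_ h1 h2] := F_bds x0 y0.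
  by rewrite le_min h1 h2.
- move=> x1 y1 x2 y2 x10 y10 x20 y20.
  have Lx : `|F_T T x1 y1 - F_T T x2 y1| <= `|x1 - x2|.
    have [x12|x21] := leP x1 x2.
      apply: absle; rewrite (distrC x1) (@ger0_norm _ (x2 - x1)); last by rewrite subr_ge0.
      exact: F_x.
    rewrite distrC; apply: absle.
    rewrite (@ger0_norm _ (x1 - x2)); last by rewrite subr_ge0 ltW.
    by apply: F_x => //; exact: ltW.
  have Ly : `|F_T T x2 y1 - F_T T x2 y2| <= `|y1 - y2|.
    have key : forall u v, 0 <= u -> u <= v ->
        0 <= F_T T x2 v - F_T T x2 u <= v - u.
      move=> u v u0 uv; rewrite F_y //.
      have [[m i] p b n] := Toc u0 uv.
      have [h1 _ h3] := Phi_bd m i p b x20.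
      by rewrite h1 /= (le_trans h3).
    have [y12|y21] := leP y1 y2.
      apply: absle; rewrite (distrC y1) (@ger0_norm _ (y2 - y1)); last by rewrite subr_ge0.
      exact: key.
    rewrite distrC; apply: absle.
    rewrite (@ger0_norm _ (y1 - y2)); last by rewrite subr_ge0 ltW.
    by apply: key => //; exact: ltW.
  apply: le_trans (ler_distD (F_T T x2 y1) _ _) _.
  exact: lerD.
Qed.

Lemma F_hom s x y : equivariant T -> 0 < s -> 0 <= x -> 0 <= y ->
  F_T T (s * x) (s * y) = s * F_T T x y.
Proof.
move=> he s0 x0 y0.
have sy0 : 0 <= s * y by rewrite mulr_ge0 // ltW.
have sx0 : 0 <= s * x by rewrite mulr_ge0 // ltW.
have [[m i] _ _ _] := Tcc y0.
have [[m' i'] _ _ _] := Tcc sy0.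
have [_ _ LL _ _] := indic_props (measurable_itv `[0, y]) (@sub_cc y) (ltac:(by rewrite mu_cc // ltry)).
have := he s _ s0 LL; rewrite indS // => hae.
pose g := (T \1_`[0, y]) \_ (@Rnonneg R).
have mg : measurable_fun [set: R] g by apply/(measurable_restrictT _ mRnonneg); exact: m.
have gE t : 0 <= t -> g t = T \1_`[0, y] t by move=> t0; rewrite /g patchE mem_set.
have ig : mu.-integrable `[0, x] (EFin \o g).
  apply: (@eq_integrable _ _ _ mu `[0, x] (measurable_itv _) (EFin \o T \1_`[0, y])).
    by move=> t; rewrite memI in_itv /= => /andP[t0 _]; rewrite /= gE.
  exact: (good_int i (measurable_itv _) (@sub_cc x)).
have [_ cv] := CV s0 x0 mg ig.
rewrite /F_T.
transitivity (Rintegral mu `[0, s * x] (fun t => g (t / s))).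
  congr fine; apply: ae_eq_integral.
  - exact: measurable_itv.
  - apply/measurable_EFinP; exact: (measurable_funS mRnonneg (@sub_cc _) m').
  - apply/measurable_EFinP; apply: (measurable_funS measurableT (@subsetT _ _)).
    apply: measurableT_comp => //; exact: measurable_realfun.mulrr_measurable.
  - apply: aeS hae => t H; rewrite /= in_itv /= => /andP[t0 _].
    by rewrite H // gE // divr_ge0 // ltW.
rewrite cv; congr (_ * _); apply: eq_Rintegral => t.
by rewrite memI in_itv /= => /andP[t0 _]; rewrite mem_set.
Qed.

End T.
End G.

Section Cop.
Variable R : realType.

Lemma copula_of (F : R -> R -> R) : subdistribution2 F ->
  (forall s x y, 0 < s -> 0 <= x -> 0 <= y -> F (s * x) (s * y) = s * F x y) ->
  tail_dependence2 F.
Proof.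
move=> [F0 F2 Fmin Flip] Fhom.
have Fle1 x y : 0 <= x -> 0 <= y -> F x y <= x.
  by move=> x0 y0; have := Fmin x y x0 y0; rewrite le_min => /andP[].
have Fle2 x y : 0 <= x -> 0 <= y -> F x y <= y.
  by move=> x0 y0; have := Fmin x y x0 y0; rewrite le_min => /andP[].
have Fx0 x : 0 <= x -> F x 0 = 0.
  by move=> x0; apply/eqP; rewrite eq_le F0 // Fle2.
have F0y y : 0 <= y -> F 0 y = 0.
  by move=> y0; apply/eqP; rewrite eq_le F0 // Fle1.
have Flipx u1 u2 y : 0 <= u1 -> u1 <= u2 -> 0 <= y -> F u2 y - F u1 y <= u2 - u1.
  move=> u10 u12 y0; have := Flip u2 y u1 y (le_trans u10 u12) y0 u10 y0.
  rewrite subrr normr0 addr0 => /(le_trans (ler_norm _)).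
  by rewrite ger0_norm // subr_ge0.
have Flipy v1 v2 x : 0 <= v1 -> v1 <= v2 -> 0 <= x -> F x v2 - F x v1 <= v2 - v1.
  move=> v10 v12 x0; have := Flip x v2 x v1 x0 (le_trans v10 v12) x0 v10.
  rewrite subrr normr0 add0r => /(le_trans (ler_norm _)).
  by rewrite ger0_norm // subr_ge0.
pose d := 1 - F 1 1.
pose g1 u := u - F u 1.
pose g2 v := v - F 1 v.
have g1_ge0 u : 0 <= u -> 0 <= g1 u by move=> u0; rewrite subr_ge0 Fle1.
have g2_ge0 v : 0 <= v -> 0 <= g2 v by move=> v0; rewrite subr_ge0 Fle2.
have g1_nd u1 u2 : 0 <= u1 -> u1 <= u2 -> g1 u1 <= g1 u2.
  move=> u10 u12; have := Flipx u1 u2 1 u10 u12 ler01; rewrite /g1; lra.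
have g2_nd u1 u2 : 0 <= u1 -> u1 <= u2 -> g2 u1 <= g2 u2.
  move=> u10 u12; have := Flipy u1 u2 1 u10 u12 ler01; rewrite /g2; lra.
have d_ge0 : 0 <= d by apply: g1_ge0.
have g1_0 : g1 0 = 0 by rewrite /g1 F0y // subrr.
have g2_0 : g2 0 = 0 by rewrite /g2 Fx0 // subrr.
pose C u v := F u v + g1 u * g2 v / d.
exists C; split.
  have C2 u1 u2 v1 v2 : unit_I u1 -> unit_I u2 -> unit_I v1 -> unit_I v2 ->
      u1 <= u2 -> v1 <= v2 -> 0 <= C u2 v2 - C u2 v1 - C u1 v2 + C u1 v1.
    move=> /andP[u10 _] /andP[u20 _] /andP[v10 _] /andP[v20 _] u12 v12.
    have -> : C u2 v2 - C u2 v1 - C u1 v2 + C u1 v1 =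
      (F u2 v2 - F u2 v1 - F u1 v2 + F u1 v1) +
      (g1 u2 - g1 u1) * (g2 v2 - g2 v1) * d^-1 by rewrite /C; ring.
    apply: addr_ge0; first exact: F2.
    apply: mulr_ge0; last by rewrite invr_ge0.
    by apply: mulr_ge0; rewrite subr_ge0; [exact: g1_nd|exact: g2_nd].
  have Cmarg u : unit_I u -> C u 1 = u /\ C 1 u = u.
    move=> /andP[u0 u1]; rewrite /C.
    have [d0|dn0] := eqVneq d 0.
      have h1 : g1 u = 0.
        by apply/eqP; rewrite eq_le g1_ge0 // andbT -[X in _ <= X]d0; apply: g1_nd.
      have h2 : g2 u = 0.
        by apply/eqP; rewrite eq_le g2_ge0 // andbT -[X in _ <= X]d0; apply: g2_nd.
      rewrite d0 invr0 !mulr0; move: h1 h2; rewrite /g1 /g2; split; lra.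
    have e1 : g2 1 = d by [].
    have e2 : g1 1 = d by [].
    rewrite e1 e2 mulrK ?unitfE // mulrAC divff // mul1r /g1 /g2; split; ring.
  have Cgr u : unit_I u -> C u 0 = 0 /\ C 0 u = 0.
    move=> /andP[u0 u1]; rewrite /C Fx0 // F0y // g1_0 g2_0; split; ring.
  split => //.
  move=> u v Iu Iv; have /andP[u0 u1] := Iu; have /andP[v0 v1] := Iv.
  apply/andP; split.
    rewrite /C; apply: addr_ge0; first exact: F0.
    by apply: mulr_ge0; [apply: mulr_ge0; [exact: g1_ge0|exact: g2_ge0]|rewrite invr_ge0].
  have I0 : unit_I (0:R) by apply/andP; split; [exact: lexx|exact: ler01].
  have I1 : unit_I (1:R) by apply/andP; split; [exact: ler01|exact: lexx].
  have := C2 0 u v 1 I0 Iu Iv I1 u0 v1.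
  have [-> _] := Cmarg u Iu; have [-> _] := Cmarg 0 I0.
  have [_ ->] := Cgr v Iv; lra.
move=> x y x0 y0.
pose K := x * y / d.
have K0 : 0 <= K by rewrite /K !mulr_ge0 // invr_ge0.
apply/cvgrPdist_le => e e0.
near=> s.
have s0 : 0 < s by near: s; exact: nbhs_right_gt.
have sd : s * (K + 1) <= e.
  near: s; exists (e / (K + 1)) => /=; first by rewrite divr_gt0 // ltr_pwDr.
  move=> t /= + t0; rewrite distrC subr0 gtr0_norm // => te.
  by rewrite -ler_pdivlMr ?ltr_pwDr // ltW.
have sx0 : 0 <= s * x by rewrite mulr_ge0 // ltW.
have sy0 : 0 <= s * y by rewrite mulr_ge0 // ltW.
have -> : C (s * x) (s * y) / s = F x y + g1 (s * x) * g2 (s * y) / d / s.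
  rewrite /C Fhom // mulrDl; congr (_ + _); rewrite mulrAC divff ?gt_eqF //.
  by rewrite mul1r.
rewrite opprD addrA subrr add0r normrN.
have E0 : 0 <= g1 (s * x) * g2 (s * y) / d / s.
  by rewrite !mulr_ge0 ?invr_ge0 ?g1_ge0 ?g2_ge0 // ltW.
rewrite ger0_norm //; apply: le_trans sd.
apply: (@le_trans _ _ (s * K)); last by rewrite ler_pM2l // lerDl.
have P : g1 (s * x) * g2 (s * y) <= (s * x) * (s * y).
  apply: ler_pM; rewrite ?g1_ge0 ?g2_ge0 //.
  + by rewrite /g1 lerBlDr lerDl F0.
  + by rewrite /g2 lerBlDr lerDl F0.
apply: (@le_trans _ _ ((s * x) * (s * y) / d / s)).
  by rewrite ler_wpM2r ?invr_ge0 ?(ltW s0) // ler_wpM2r ?invr_ge0.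
have -> : (s * x) * (s * y) / d / s = s * K * (s / s) by rewrite /K; ring.
by rewrite divff ?gt_eqF // mulr1.
Unshelve. all: by end_near.
Qed.
End Cop.

Unset Implicit Arguments.

Theorem mainTheorem14 (R : realType) (T : (R -> R) -> (R -> R)) :
  doubly_substochastic T ->
  subdistribution2 (F_T T) /\ (equivariant T -> tail_dependence2 (F_T T)).
Proof.
move=> hT; split; first exact: F_sub.
move=> he; apply: copula_of; first exact: F_sub.
by move=> s x y s0 x0 y0; exact: F_hom.
Qed.
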